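(* Under the standing assumptions below, for a single consensus instance $\mathsf{swid}$, any two commit certificates $\mathsf{cert}[\mathsf{Commit}(P_1)]$ and $\mathsf{cert}[\mathsf{Commit}(P_2)]$ for proposals $P_1,P_2$ of $\mathsf{swid}$ satisfy $\mathsf{decision}(P_1)=\mathsf{decision}(P_2)$.
   Context: Setting. There is a fixed finite set of authorities, some of which are honest and the rest arbitrary (Byzantine). A \emph{quorum} is a set of authorities of a fixed size (e.g. $2f+1$ out of $n=3f+1$ with at most $f$ dishonest), such that any two quorums intersect in at least one honest authority. For a message $M$, a \emph{certificate} $\mathsf{cert}[M]$ exists only if every authority of some quorum has signed (voted for) $M$. Data. A decision value is either $\mathsf{Confirm}$ or $\mathsf{Abort}$. A \emph{proposal} is a message $P = \mathsf{Proposal}(\mathsf{swid}, k, V)$ with round number $k \in \mathbb{N}$ and decision value $V$; write $\mathsf{round}(P)=k$, $\mathsf{decision}(P)=V$. A \emph{pre-commit certificate} is $C=\mathsf{cert}[\mathsf{PreCommit}(P)]$ and a \emph{commit certificate} is $C^*=\mathsf{cert}[\mathsf{Commit}(P)]$; $\mathsf{round}$ and $\mathsf{decision}$ of such certificates are those of $P$. Honest behavior. Each honest authority $\alpha$ keeps, for the instance $\mathsf{swid}$, two fields $\mathsf{proposed}(\alpha)$ (initially $\bot$, later a proposal) and $\mathsf{locked}(\alpha)$ (initially $\bot$, later a pre-commit certificate), which change only as follows. (i) $\alpha$ signs $\mathsf{PreCommit}(P)$ only if at that moment $P$ is \emph{safe}: (a) if $\mathsf{proposed}(\alpha)=P_0\neq\bot$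 and $P\ne P_0$ then $\mathsf{round}(P)>\mathsf{round}(P_0)$; and (b) if $\mathsf{locked}(\alpha)=C_0\neq\bot$ then $\mathsf{round}(P)>\mathsf{round}(C_0)$ and $\mathsf{decision}(P)=\mathsf{decision}(C_0)$; upon signing it sets $\mathsf{proposed}(\alpha):=P$. (ii) $\alpha$ signs $\mathsf{Commit}(P)$ only upon receiving a valid pre-commit certificate $C=\mathsf{cert}[\mathsf{PreCommit}(P)]$ that is \emph{safe} at that moment: (c) if $\mathsf{proposed}(\alpha)=P_0\neq\bot$ then $\mathsf{round}(C)\ge\mathsf{round}(P_0)$; and (d) if $\mathsf{locked}(\alpha)=C_0\neq\bot$ then $\mathsf{round}(C)\ge\mathsf{round}(C_0)$; upon signing it sets $\mathsf{locked}(\alpha):=C$. In particular, an honest authority signs $\mathsf{Commit}(P)$ only if a certificate $\mathsf{cert}[\mathsf{PreCommit}(P)]$ exists. *)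

(* Defs.v *)
From Stdlib Require Import List.
From mathcomp Require Import all_boot.
Set Implicit Arguments. Unset Strict Implicit. Unset Printing Implicit Defensive.

Inductive Decision := Confirm | Abort.

Section Model.
Variable A : finType.     (* authorities *)
Variable W : eqType.      (* consensus instance identifiers (swid) *)

Record Proposal := mkProposal { p_swid : W; p_round : nat; p_decision : Decision }.

Inductive Msg := PreCommit of Proposal | Commit of Proposal.

(* A pre-commit certificate cert[PreCommit(P)] : the proposal together with
   the quorum of authorities whose PreCommit(P) signatures it contains. *)
Record PreCert := mkPreCert { pc_prop : Proposal; pc_quorum : {set A} }.
Definition cert_round (C : PreCert) := p_round (pc_prop C).
Definition cert_decision (C : PreCert) := p_decision (pc_prop C).

(* Events of an execution: an authority signs a message.  Signing Commit(P)
   is done upon a (claimed) pre-commit certificate for P. *)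
Inductive Event :=
| SignPre of A & Proposal
| SignCommit of A & PreCert.

Definition ev_signer (e : Event) : A :=
  match e with SignPre a _ => a | SignCommit a _ => a end.
Definition ev_msg (e : Event) : Msg :=
  match e with SignPre _ P => PreCommit P | SignCommit _ C => Commit (pc_prop C) end.

(* A trace is the chronological list of events (oldest first). *)
Definition signed (tr : seq Event) (a : A) (m : Msg) : Prop :=
  exists e, List.In e tr /\ ev_signer e = a /\ ev_msg e = m.

Definition quorum (q : nat) (Q : {set A}) : Prop := #|Q| = q.

Definition cert_exists (q : nat) (tr : seq Event) (m : Msg) : Prop :=
  exists Q : {set A}, quorum q Q /\ forall x, x \in Q -> signed tr x m.

Definition valid_precert (q : nat) (tr : seq Event) (C : PreCert) : Prop :=
  quorum q (pc_quorum C) /\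
  forall x, x \in pc_quorum C -> signed tr x (PreCommit (pc_prop C)).

Record AState := mkAState { proposed : option Proposal; locked : option PreCert }.
Definition init_state := mkAState None None.

Definition update (a : A) (w : W) (st : AState) (e : Event) : AState :=
  match e with
  | SignPre b P =>
      if (b == a) && (p_swid P == w) then mkAState (Some P) (locked st) else st
  | SignCommit b C =>
      if (b == a) && (p_swid (pc_prop C) == w) then mkAState (proposed st) (Some C) else st
  end.

Definition state (a : A) (w : W) (tr : seq Event) : AState :=
  foldl (update a w) init_state tr.

Definition safe_precommit (st : AState) (P : Proposal) : Prop :=
  (forall P0, proposed st = Some P0 -> P <> P0 -> p_round P > p_round P0) /\
  (forall C0, locked st = Some C0 ->
      p_round P > cert_round C0 /\ p_decision P = cert_decision C0).

Definition safe_commit (st : AState) (C : PreCert) : Prop :=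
  (forall P0, proposed st = Some P0 -> cert_round C >= p_round P0) /\
  (forall C0, locked st = Some C0 -> cert_round C >= cert_round C0).

(* Admissible executions: honest authorities sign only following the rules
   (their state being computed from the trace so far), dishonest ones sign
   arbitrarily. *)
Inductive execution (honest : pred A) (q : nat) : seq Event -> Prop :=
| exec_nil : execution honest q [::]
| exec_byz tr e : execution honest q tr -> ~~ honest (ev_signer e) ->
    execution honest q (rcons tr e)
| exec_pre tr a P : execution honest q tr -> honest a ->
    safe_precommit (state a (p_swid P) tr) P ->
    execution honest q (rcons tr (SignPre a P))
| exec_com tr a C : execution honest q tr -> honest a ->
    valid_precert q tr C ->
    safe_commit (state a (p_swid (pc_prop C)) tr) C ->
    execution honest q (rcons tr (SignCommit a C)).

End Model.

Arguments PreCommit {W}.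
Arguments Commit {W}.

(* Main.v *)
From Stdlib Require Import List Classical.
Require Import Defs.
From mathcomp Require Import all_boot.
From mathcomp Require Import zify.

Lemma In_rcons {T : Type} (x y : T) s : List.In x (rcons s y) <-> List.In x s \/ x = y.
Proof. rewrite -cats1 in_app_iff /=; intuition. Qed.

Definition ev_swid {A : finType} {W : eqType} (e : Event A W) : W :=
  match e with SignPre _ P => p_swid P | SignCommit _ C => p_swid (pc_prop C) end.

Lemma state_rcons {A : finType} {W : eqType} (b : A) (w : W) tr e :
  state b w (rcons tr e) = update b w (state b w tr) e.
Proof. by rewrite /state foldl_rcons. Qed.

Lemma state_irrel {A : finType} {W : eqType} (b : A) (w : W) tr e :
  ~ (ev_signer e = b /\ ev_swid e = w) -> state b w (rcons tr e) = state b w tr.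
Proof.
rewrite state_rcons; case: e => [a P|a C] /= H; case: ifP => // /andP [/eqP h1 /eqP h2];
by case: H.
Qed.

Lemma signed_rcons {A : finType} {W : eqType} tr e (x : A) (m : Msg W) :
  signed tr x m -> signed (rcons tr e) x m.
Proof. move=> [e' [h1 h2]]; exists e'; split => //; apply/In_rcons; by left. Qed.

Lemma valid_rcons {A : finType} {W : eqType} q tr e (C : PreCert A W) :
  valid_precert q tr C -> valid_precert q (rcons tr e) C.
Proof. move=> [h1 h2]; split => // x hx; apply: signed_rcons; exact: h2. Qed.

Definition Inv_bw {A : finType} {W : eqType} (q : nat) (tr : seq (Event A W)) (b : A) (w : W) : Prop :=
 (forall P, List.In (SignPre b P) tr -> p_swid P = w ->
    exists P0, proposed (state b w tr) = Some P0 /\ (P0 = P \/ p_round P < p_round P0)) /\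
 (forall C, List.In (SignCommit b C) tr -> p_swid (pc_prop C) = w ->
    exists L, Defs.locked (state b w tr) = Some L /\ cert_round C <= cert_round L /\
      valid_precert q tr L /\ p_swid (pc_prop L) = w) /\
 (forall P P', List.In (SignPre b P) tr -> List.In (SignPre b P') tr -> p_swid P = w ->
    p_swid P' = w -> p_round P = p_round P' -> P = P') /\
 (forall C P', List.In (SignCommit b C) tr -> List.In (SignPre b P') tr ->
    p_swid (pc_prop C) = w -> p_swid P' = w -> cert_round C < p_round P' ->
    exists L, valid_precert q tr L /\ cert_round C <= cert_round L /\
      cert_round L < p_round P' /\ p_decision P' = cert_decision L /\ p_swid (pc_prop L) = w).

Lemma Inv_irrel {A : finType} {W : eqType} q tr (b : A) (w : W) e :
  Inv_bw q tr b w -> ~ (ev_signer e = b /\ ev_swid e = w) -> Inv_bw q (rcons tr e) b w.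
Proof.
move=> [S1 [S2 [H1 H2]]] Hr.
have oldP : forall P, List.In (SignPre b P) (rcons tr e) -> p_swid P = w -> List.In (SignPre b P) tr.
  move=> P /In_rcons [//|?] hw; subst e; by case: Hr.
have oldC : forall C, List.In (SignCommit b C) (rcons tr e) -> p_swid (pc_prop C) = w -> List.In (SignCommit b C) tr.
  move=> C /In_rcons [//|?] hw; subst e; by case: Hr.
rewrite /Inv_bw (@state_irrel _ _ b w tr e Hr).
split; [|split; [|split]].
- move=> P hP hw; exact: S1 (oldP _ hP hw) hw.
- move=> C hC hw; have [L [h1 [h2 [h3 h4]]]] := S2 _ (oldC _ hC hw) hw.
  exists L; split => //; split => //; split => //; exact: valid_rcons.
- move=> P P' h h' hw hw'; exact: H1 (oldP _ h hw) (oldP _ h' hw') hw hw'.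
- move=> C P' h h' hw hw' hlt.
  have [L [h1 [h2 [h3 [h4 h5]]]]] := H2 _ _ (oldC _ h hw) (oldP _ h' hw') hw hw' hlt.
  exists L; split => //; exact: valid_rcons.
Qed.

Lemma Inv_exec {A : finType} {W : eqType} {honest : pred A} {q} {tr : seq (Event A W)} :
  execution honest q tr -> forall b w, honest b -> Inv_bw q tr b w.
Proof.
elim => {tr} [|tr e ex IH hn|tr a P ex IH ha hs|tr a C ex IH ha hv hs] b w hb.
- split; [|split; [|split]] => //.
- apply: Inv_irrel; first exact: IH.
  move=> [h _]; move: hn; rewrite h hb //.
- case: (classic (a = b /\ p_swid P = w)) => [[? hw]|Hr]; last first.
    by apply: Inv_irrel; [exact: IH|].
  subst a; subst w.
  have [S1 [S2 [H1 H2]]] := IH b (p_swid P) hb.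
  move: hs => [sa sb].
  have hst : state b (p_swid P) (rcons tr (SignPre b P)) =
             mkAState (Some P) (Defs.locked (state b (p_swid P) tr)).
    by rewrite state_rcons /= !eqxx.
  rewrite /Inv_bw hst /=.
  split; [|split; [|split]].
  + move=> P'' /In_rcons [h|[= <-]] hw; last by eexists; split; [reflexivity|left].
    have [P0 [e0 d0]] := S1 _ h hw.
    exists P; split => //.
    case: (classic (P = P0)) => [eq|ne].
      subst P0.
      case: d0 => [->|lt]; [by left| by right].
    have lt := sa _ e0 ne; right; case: d0 => [eq|?]; [subst P0|]; lia.
  + move=> C /In_rcons [h|//] hw; have [L [h1 [h2 [h3 h4]]]] := S2 _ h hw.
    exists L; split => //; split => //; split => //; exact: valid_rcons.
  + have key : forall P'', List.In (SignPre b P'') tr -> p_swid P'' = p_swid P ->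
                 p_round P'' = p_round P -> P'' = P.
      move=> P'' h hw hr; have [P0 [e0 d0]] := S1 _ h hw.
      case: (classic (P = P0)) => [eq|ne].
        subst P0; case: d0 => // ?; exfalso; lia.
      have lt := sa _ e0 ne; exfalso; case: d0 => [eq|?]; [subst P0|]; lia.
    move=> P1 P2 /In_rcons [h1|[= e1]] /In_rcons [h2|[= e2]] w1 w2 hr.
    * exact: H1.
    * rewrite e2; apply: key => //; by rewrite hr e2.
    * rewrite e1; symmetry; apply: key => //; by rewrite -hr e1.
    * by rewrite e1 e2.
  + move=> C P' /In_rcons [hC|//] /In_rcons [hP|[= eP]] wC wP hlt.
    * have [L [h1 [h2 [h3 [h4 h5]]]]] := H2 _ _ hC hP wC wP hlt.
      exists L; split => //; exact: valid_rcons.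
    * subst P'.
      have [L [h1 [h2 [h3 h4]]]] := S2 _ hC wC.
      have [r d] := sb _ h1.
      exists L; split; first exact: valid_rcons.
      split => //; split => //.
- case: (classic (a = b /\ p_swid (pc_prop C) = w)) => [[? hw]|Hr]; last first.
    by apply: Inv_irrel; [exact: IH|].
  subst a; subst w.
  have [S1 [S2 [H1 H2]]] := IH b (p_swid (pc_prop C)) hb.
  move: hs => [sc sd].
  have hst : state b (p_swid (pc_prop C)) (rcons tr (SignCommit b C)) =
             mkAState (proposed (state b (p_swid (pc_prop C)) tr)) (Some C).
    by rewrite state_rcons /= !eqxx.
  rewrite /Inv_bw hst /=.
  split; [|split; [|split]].
  + move=> P /In_rcons [h|//] hw; exact: S1.
  + move=> C'' /In_rcons [h|[= eC]] hw.
    * have [L [h1 [h2 [h3 h4]]]] := S2 _ h hw.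
      have le := sd _ h1.
      exists C; split => //; split; first lia.
      split => //; exact: valid_rcons.
    * subst C''; exists C; split => //; split => //; split => //; exact: valid_rcons.
  + move=> P1 P2 /In_rcons [h1|//] /In_rcons [h2|//]; exact: H1.
  + move=> C1 P' /In_rcons [hC|[= eC]] /In_rcons [hP|//] wC wP hlt.
    * have [L [h1 [h2 [h3 [h4 h5]]]]] := H2 _ _ hC hP wC wP hlt.
      exists L; split => //; exact: valid_rcons.
    * subst C1; exfalso; have [P0 [e0 d0]] := S1 _ hP wP.
      have := sc _ e0; case: d0 => [eq|?]; [subst P0|]; lia.
Qed.

Lemma H3_exec {A : finType} {W : eqType} {honest : pred A} {q} {tr : seq (Event A W)} :
  execution honest q tr -> forall b C, honest b -> List.In (SignCommit b C) tr ->
  valid_precert q tr C.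
Proof.
elim => {tr} [|tr e ex IH hn|tr a P ex IH ha hs|tr a C' ex IH ha hv hs] b C hb //=.
- move=> /In_rcons [h|?]; first (apply: valid_rcons; exact: IH h).
  subst e; move: hn; rewrite /= hb //.
- move=> /In_rcons [h|//]; apply: valid_rcons; exact: IH h.
- move=> /In_rcons [h|[= e1 e2]]; apply: valid_rcons; [exact: IH h| by subst].
Qed.

Lemma signed_commit {A : finType} {W : eqType} {tr} {x : A} {P : Proposal W} :
  signed tr x (Commit P) -> exists C, List.In (SignCommit x C) tr /\ pc_prop C = P.
Proof.
move=> [[a P'|a C] [h1 [h2 h3]]] //=; simpl in h2, h3; subst a.
by case: h3 => <-; exists C.
Qed.

Lemma signed_pre {A : finType} {W : eqType} {tr} {x : A} {P : Proposal W} :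
  signed tr x (PreCommit P) -> List.In (SignPre x P) tr.
Proof.
move=> [[a P'|a C] [h1 [h2 h3]]] //=; simpl in h2, h3; subst a.
by case: h3 => <-.
Qed.

Lemma main_ind (A : finType) (W : eqType) (honest : pred A) (q : nat)
  (quorum_intersect : forall Q1 Q2 : {set A}, quorum q Q1 -> quorum q Q2 ->
      exists a, [/\ a \in Q1, a \in Q2 & honest a])
  (w : W) (tr : seq (Event A W)) (exec : execution honest q tr)
  (P : Proposal W) (hP : p_swid P = w) (hc : cert_exists q tr (Commit P)) :
  forall n (P' : Proposal W), p_round P' <= n -> p_swid P' = w ->
  cert_exists q tr (PreCommit P') -> p_round P <= p_round P' ->
  p_decision P' = p_decision P.
Proof.
have INV := Inv_exec exec.
have H3 := H3_exec exec.
have same : forall P1 P2 : Proposal W, p_swid P1 = w -> p_swid P2 = w ->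
   cert_exists q tr (PreCommit P1) -> cert_exists q tr (PreCommit P2) ->
   p_round P1 = p_round P2 -> P1 = P2.
  move=> P1 P2 w1 w2 [Q1 [q1 s1]] [Q2 [q2 s2]] hr.
  have [c [c1 c2 hc']] := quorum_intersect _ _ q1 q2.
  have [_ [_ [H1 _]]] := INV c w hc'.
  apply: H1 => //; apply: signed_pre; [exact: s1|exact: s2].
case: hc => [QC [qC sC]].
have hPc : cert_exists q tr (PreCommit P).
  have [c [c1 c2 hc']] := quorum_intersect _ _ qC qC.
  have [C [hC eC]] := signed_commit (sC _ c1).
  have [v1 v2] := H3 _ _ hc' hC; exists (pc_quorum C); split => // x hx; rewrite -eC; exact: v2.
elim=> [|n IHn] P' hn hw' [Q' [q' s']] hle.
- have -> // : P' = P.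
  apply: same; [done|done|by exists Q'|exact: hPc|lia].
- have [b [b1 b2 hb]] := quorum_intersect _ _ qC q'.
  have [C [hC eC]] := signed_commit (sC _ b1).
  case: (leqP (p_round P') (p_round P)) => hr.
    have -> // : P' = P.
    apply: same; [done|done|by exists Q'|exact: hPc|lia].
  have [_ [_ [_ H2]]] := INV b w hb.
  have e1 : p_swid (pc_prop C) = w by rewrite eC.
  have e2 : cert_round C < p_round P' by rewrite /cert_round eC.
  have [L [hL [l1 [l2 [l3 l4]]]]] := H2 C P' hC (signed_pre (s' _ b2)) e1 hw' e2.
  rewrite l3.
  apply: (IHn (pc_prop L)) => //.
  + rewrite /cert_round in l2; lia.
  + case: hL => h1 h2; by exists (pc_quorum L).
  + by move: l1; rewrite /cert_round eC.
Qed.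

Theorem mainTheorem2 (A : finType) (W : eqType) (honest : pred A) (q : nat)
  (quorum_intersect : forall Q1 Q2 : {set A}, quorum q Q1 -> quorum q Q2 ->
      exists a, [/\ a \in Q1, a \in Q2 & honest a])
  (swid : W) (tr : seq (Event A W)) (exec : execution honest q tr)
  (P1 P2 : Proposal W) (hP1 : p_swid P1 = swid) (hP2 : p_swid P2 = swid) :
  cert_exists q tr (Commit P1) -> cert_exists q tr (Commit P2) ->
  p_decision P1 = p_decision P2.
Proof.
move=> c1 c2.
have H3 := H3_exec exec.
have pre : forall P, cert_exists q tr (Commit P) -> cert_exists q tr (PreCommit P).
  move=> P [Q [qQ sQ]].
  have [c [ca _ hc]] := quorum_intersect _ _ qQ qQ.
  have [C [hC eC]] := signed_commit (sQ _ ca).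
  have [v1 v2] := H3 _ _ hc hC; exists (pc_quorum C); split => // x hx; rewrite -eC; exact: v2.
case: (leqP (p_round P1) (p_round P2)) => hr.
- symmetry; apply: (@main_ind _ _ _ _ quorum_intersect _ _ exec _ hP1 c1 _ P2 (leqnn _)) => //; exact: pre.
- apply: (@main_ind _ _ _ _ quorum_intersect _ _ exec _ hP2 c2 _ P1 (leqnn _)) => //; [exact: pre|lia].
Qed.
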